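(* Fix $\gamma \ge 1$, $\beta \in (0,1)$ and $r > 0$ with $r < \beta$. Let $\Psi$ be a continuous survival function that is asymptotically generalized Gaussian on the right with exponent $\gamma$. For each $n$, let $m = \lfloor n^{1-\beta} \rfloor$ and $\mu = (\gamma r \log n)^{1/\gamma}$, and draw a subset $\mathscr{F} \subset [n]$ of size $m$ uniformly at random. Set $\mu_i = \mu$ for $i \in \mathscr{F}$ and $\mu_i = 0$ otherwise. Let $X_1,\dots,X_n$ be independent with $X_i$ having survival function $\Psi(\cdot - \mu_i)$. Then the oracle risk satisfies $$\liminf_{n\to\infty} \mathbb{E}\Big[\min_{t \in \mathbb{R}} \big(\mathrm{FDP}(\mathscr{R}_t) + \mathrm{FNP}(\mathscr{R}_t)\big)\Big] \ge 1.$$ Here the oracle threshold $\tau_o$ is any minimizer of $t \mapsto \mathrm{FDP}(\mathscr{R}_t)+\mathrm{FNP}(\mathscr{R}_t)$ over $t \in \mathbb{R}$, and the oracle risk is $\mathbb{E}[\mathrm{FDP}(\mathscr{R}_{\tau_o})+\mathrm{FNP}(\mathscr{R}_{\tau_o})]$.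
   Context: The survival function of a random variable $Y$ is $y \mapsto \mathbb{P}(Y \ge y)$. A survival function $\Psi$ is asymptotically generalized Gaussian (AGG) on the right with exponent $\gamma>0$ if $\lim_{x\to\infty} x^{-\gamma}\log\Psi(x) = -1/\gamma$. The $i$-th null hypothesis is $\mu_i = 0$, and $\mathscr{F}$ is the set of false nulls. For a set $\mathscr{R} \subset [n]=\{1,\dots,n\}$ of rejected hypotheses: - $\mathrm{FDP}(\mathscr{R}) = |\mathscr{R}\setminus\mathscr{F}|/|\mathscr{R}|$, - $\mathrm{FNP}(\mathscr{R}) = |\mathscr{F}\setminus\mathscr{R}|/|\mathscr{F}|$, with the convention $0/0=0$. For $t \in \mathbb{R}$, $\mathscr{R}_t = \{i : X_i \ge t\}$. *)

(* Defs.v *)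
From HB Require Import structures.
From mathcomp Require Import all_boot all_order all_algebra.
From mathcomp Require Import all_classical all_reals all_analysis.
Set Implicit Arguments. Unset Strict Implicit. Unset Printing Implicit Defensive.
Import Order.TTheory GRing.Theory Num.Theory.
Import numFieldNormedType.Exports.
Local Open Scope classical_set_scope.
Local Open Scope ring_scope.

Definition is_survival_function (R : realType) (Psi : R -> R) : Prop :=
  exists Q : probability R R, forall y : R, (Psi y)%:E = Q [set z : R | y <= z].

Definition AGG_right (R : realType) (gamma : R) (Psi : R -> R) : Prop :=
  (fun x : R => x `^ (- gamma) * ln (Psi x)) @ +oo%R --> (- gamma^-1 : R).

(* FDP / FNP with the convention 0/0 = 0 *)
Definition FDP (R : realType) (n : nat) (Rj Fs : {set 'I_n}) : R :=
  if #|Rj| == 0%N then 0 else (#|Rj :\: Fs|%:R / #|Rj|%:R).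
Definition FNP (R : realType) (n : nat) (Rj Fs : {set 'I_n}) : R :=
  if #|Fs| == 0%N then 0 else (#|Fs :\: Rj|%:R / #|Fs|%:R).

Definition rej_set (R : realType) (n : nat) (x : 'I_n -> R) (t : R) : {set 'I_n} :=
  [set i | t <= x i].

(* min over t in R of FDP(R_t) + FNP(R_t) (the set of values is finite and
   nonempty, so the infimum is attained) *)
Definition oracle_loss (R : realType) (n : nat) (Fs : {set 'I_n}) (x : 'I_n -> R) : R :=
  inf [set @FDP R n (rej_set x t) Fs + @FNP R n (rej_set x t) Fs | t in [set: R]].

Definition m_n (R : realType) (beta : R) (n : nat) : nat :=
  Num.truncn ((n%:R : R) `^ (1 - beta)).
Definition mu_n (R : realType) (gamma r : R) (n : nat) : R :=
  (gamma * r * ln (n%:R : R)) `^ (gamma^-1).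

(* Main.v *)
Require Import Defs.
From HB Require Import structures.
From mathcomp Require Import all_boot all_order all_algebra.
From mathcomp Require Import all_classical all_reals all_analysis.
From mathcomp Require Import ring lra.
Set Implicit Arguments. Unset Strict Implicit. Unset Printing Implicit Defensive.
Import Order.TTheory GRing.Theory Num.Theory.
Import numFieldNormedType.Exports.
Local Open Scope classical_set_scope.
Local Open Scope ring_scope.
Lemma hV (R : realType) (V m K : R) : 0 <= V -> 0 < m -> 1 <= K ->
  K/(K+2) * (2 * V / (K * m) - V^+2 / (K^+2 * m^+2)) <= V / (V + m).
Proof.
move=> V0 m0 K1.
have K0 : 0 < K by lra.
set s := V / m.
have s0 : 0 <= s by rewrite /s divr_ge0 // ltW.
rewrite -subr_le0.
have -> : K/(K+2) * (2 * V / (K * m) - V^+2 / (K^+2 * m^+2)) - V / (V + m)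
   = - (s * ((K - s)^+2 + s) / (K * (K+2) * (s+1))).
  have hm : m != 0 by apply/negP=> /eqP; lra.
  have hVm : V + m != 0 by apply/negP=> /eqP; lra.
  have hK : K != 0 by apply/negP=> /eqP; lra.
  have hK2 : K + 2 != 0 by apply/negP=> /eqP; lra.
  have hs1 : s + 1 != 0 by apply/negP=> /eqP; lra.
  rewrite /s in hs1 *; field.
  by rewrite hm hVm hK2 hK.
rewrite oppr_le0 divr_ge0 //; first by apply: mulr_ge0 => //; rewrite addr_ge0 // sqr_ge0.
apply: mulr_ge0; last lra.
apply: mulr_ge0; lra.
Qed.

Lemma hV1 (R : realType) (V m K : R) : 0 < m -> 1 <= K ->
  K/(K+2) * (2 * V / (K * m) - V^+2 / (K^+2 * m^+2)) <= 1.
Proof.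
move=> m0 K1.
have K0 : 0 < K by lra.
set t := V / (K * m).
have -> : 2 * V / (K * m) - V^+2 / (K^+2 * m^+2) = 2 * t - t^+2.
  have hm : m != 0 by apply/negP=> /eqP; lra.
  have hK : K != 0 by apply/negP=> /eqP; lra.
  rewrite /t; field; by rewrite hm hK.
have h1 : 2 * t - t^+2 <= 1 by have := sqr_ge0 (t - 1); rewrite sqrrB; lra.
have c0 : 0 <= K / (K+2) by rewrite divr_ge0 //; lra.
have c1 : K / (K+2) <= 1 by rewrite ler_pdivrMr; lra.
have [h|h] := lerP 0 (2 * t - t^+2).
  by apply: le_trans (ler_pM c0 h c1 h1) _; rewrite mulr1.
by apply: le_trans (_ : 0 <= 1); [rewrite -(mulr0 (K/(K+2))) ler_wpM2l // ltW | lra].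
Qed.

Definition hfun (R : realType) (K m V : R) :=
  K/(K+2) * (2 * V / (K * m) - V^+2 / (K^+2 * m^+2)).

Lemma pointwise (R : realType) n (F0 : {set 'I_n}) (x : 'I_n -> R) (u K : R) :
  (0 < #|F0|)%N -> 1 <= K ->
  hfun K (#|F0|%:R) (#|[set i | u <= x i]%SET :\: F0|%:R)
   - #|F0 :&: [set i | u <= x i]%SET|%:R / #|F0|%:R <= oracle_loss F0 x.
Proof.
move=> F0pos K1.
set m := #|F0|%:R; set V := #|[set i | u <= x i]%SET :\: F0|%:R.
set S := #|F0 :&: [set i | u <= x i]%SET|%:R.
have m0 : 0 < m by rewrite /m ltr0n.
have S0 : 0 <= S / m by rewrite divr_ge0 // ltW.
apply: lb_le_inf; first by exists (@FDP R n (rej_set x 0) F0 + @FNP R n (rej_set x 0) F0), 0.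
move=> _ [t _ <-].
set Rt := rej_set x t.
have FDP0 : 0 <= @FDP R n Rt F0.
  by rewrite /FDP; case: ifP => // _; rewrite divr_ge0.
have FNP0 : 0 <= @FNP R n Rt F0.
  by rewrite /FNP; case: ifP => // _; rewrite divr_ge0.
have FNPE : @FNP R n Rt F0 = #|F0 :\: Rt|%:R / m.
  by rewrite /FNP; case: eqP => // h; move: F0pos; rewrite h.
have [tu|ut] := lerP t u.
- set D := #|Rt :\: F0|.
  have VD : (#|[set i | (u <= x i)%R]%SET :\: F0| <= D)%N.
    apply: subset_leq_card; apply/fintype.subsetP => i.
    by rewrite /Rt /rej_set !inE => /andP[-> /(le_trans tu) ->].
  have RtD : #|Rt| = (#|Rt :&: F0| + D)%N by rewrite cardsID.
  have RtF : (#|Rt :&: F0| <= #|F0|)%N by apply: subset_leq_card; apply: subsetIr.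
  have [Rt0|Rt0] := eqVneq #|Rt| 0%N.
    have D0 : D = 0%N by move: RtD; rewrite Rt0 => /esym /eqP; rewrite addn_eq0 => /andP[_ /eqP].
    have V0 : V = 0 by rewrite /V; move: VD; rewrite D0 leqn0 => /eqP ->.
    rewrite /hfun V0 expr2 !(mulr0, mul0r) subrr mulr0 sub0r.
    apply: le_trans (_ : 0 <= _); first by rewrite oppr_le0.
    exact: addr_ge0.
  have FDPE : @FDP R n Rt F0 = D%:R / #|Rt|%:R by rewrite /FDP (negbTE Rt0).
  apply: (@le_trans _ _ (hfun K m V)); first by rewrite lerBlDr lerDl.
  apply: (@le_trans _ _ (@FDP R n Rt F0)); last by rewrite lerDl.
  apply: (le_trans (hV _ _ _)) => //.
  rewrite FDPE.
  have V0 : 0 <= V by rewrite /V ler0n.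
  have VDr : V <= D%:R by rewrite /V ler_nat.
  have Rtp : 0 < #|Rt|%:R :> R by rewrite ltr0n lt0n.
  have RtDr : #|Rt|%:R <= D%:R + m :> R.
    by rewrite RtD natrD addrC lerD2l ler_nat.
  rewrite ler_pdivrMr; last lra.
  rewrite mulrAC ler_pdivlMr //.
  nra.
- have sub : F0 :\: [set i | u <= x i]%SET \subset F0 :\: Rt.
    apply/fintype.subsetP => i; rewrite /Rt /rej_set !inE => /andP[h ->].
    rewrite andbT; apply: contra h; exact: (le_trans (ltW ut)).
  have card1 : #|F0 :&: [set i | u <= x i]%SET| + #|F0 :\: [set i | u <= x i]%SET| = #|F0|.
    exact: cardsID.
  have hb : 1 - S / m <= @FNP R n Rt F0.
    rewrite FNPE.
    have -> : 1 - S / m = (m - S) / m by field; apply/negP=> /eqP; lra.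
    rewrite ler_pM2r ?invr_gt0 //.
    have -> : m - S = #|F0 :\: [set i | u <= x i]%SET|%:R.
      by rewrite /m -card1 natrD /S addrC addKr.
    by rewrite ler_nat subset_leq_card.
  apply: (@le_trans _ _ (1 - S / m)); first by rewrite lerD2r hV1.
  by apply: (le_trans hb); rewrite lerDr.
Qed.
Section Good.
Context d (T : measurableType d) (R : realType) (P : probability T R).

Definition good (f : T -> R) (v : R) :=
  P.-integrable setT (fun w => (f w)%:E) /\ (\int[P]_w (f w)%:E = v%:E)%E.

Lemma good_ext f g v : (forall w, f w = g w) -> good f v -> good g v.
Proof. by move=> fg; have -> : f = g by apply/funext. Qed.

Lemma good0 : good (fun _ => 0) 0.
Proof. by split; [exact: (integrable0 P setT)| exact: integral0]. Qed.

Lemma good_indic (A : set T) : measurable A -> good (\1_A) (fine (P A)).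
Proof.
move=> mA; split; first exact: integrable_indic.
rewrite integral_indic // setIT fineK //; exact: fin_num_measure.
Qed.

Lemma good_add f g v w : good f v -> good g w -> good (fun x => f x + g x) (v + w).
Proof.
move=> [fi fv] [gi gv]; split.
  by apply: eq_integrable (integrableD measurableT fi gi) => //= x _; rewrite EFinD.
under eq_integral do rewrite EFinD.
by rewrite integralD // fv gv.
Qed.

Lemma good_scale f v (r : R) : good f v -> good (fun x => r * f x) (r * v).
Proof.
move=> [fi fv]; split.
  by apply: eq_integrable (integrableZl measurableT r fi) => //= x _; rewrite EFinM.
under eq_integral do rewrite EFinM.
by rewrite integralZl // fv.
Qed.

Lemma good_sum (I : Type) (s : seq I) (Pr : pred I) (f : I -> T -> R) (v : I -> R) :
  (forall i, Pr i -> good (f i) (v i)) ->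
  good (fun x => \sum_(i <- s | Pr i) f i x) (\sum_(i <- s | Pr i) v i).
Proof.
move=> h; elim: s => [|a s ih].
  by rewrite big_nil; apply: good_ext good0 => w; rewrite big_nil.
rewrite big_cons; case: ifP => Pa.
  by apply: good_ext (good_add (h a Pa) ih) => w; rewrite big_cons Pa.
by apply: good_ext ih => w; rewrite big_cons Pa.
Qed.

Lemma good_le (f g : T -> R) v : (forall w, 0 <= g w) -> (forall w, f w <= g w) ->
  good f v -> (v%:E <= \int[P]_w (g w)%:E)%E.
Proof.
move=> g0 fg [fi <-].
rewrite integralE.
apply: (@le_trans _ _ (\int[P]_x ((fun w => (f w)%:E)^\+ x))%E).
  rewrite leeBlDr; last first.
    exact: integrable_neg_fin_num.
  by rewrite leeDl // integral_ge0.
rewrite ge0_integralTE; last by move=> x; exact: funepos_ge0.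
rewrite ge0_integralTE; last by move=> x; rewrite lee_fin.
apply: ereal_sup_le => _ [h /= hf <-]; exists h => //= x.
apply: le_trans (hf x) _.
by rewrite funeposE ge_max !lee_fin fg g0.
Qed.
End Good.

Section Expect.
Context d (T : measurableType d) (R : realType) (P : probability T R) (n : nat)
  (F : T -> {set 'I_n}) (X : 'I_n -> T -> R) (u : R).
Hypothesis mF : forall S, measurable [set w | F w = S].
Hypothesis mX : forall i, measurable_fun setT (X i).

Definition A1 (S : {set 'I_n}) (i : 'I_n) :=
  [set w | F w = S /\ forall k, k \in [set i]%SET -> (fun _ : 'I_n => u) k <= X k w].
Definition A2 (S : {set 'I_n}) (i j : 'I_n) :=
  [set w | F w = S /\ forall k, k \in [set i; j]%SET -> (fun _ : 'I_n => u) k <= X k w].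

Lemma mpre i : measurable [set w | u <= X i w].
Proof.
rewrite (_ : [set w | u <= X i w] = setT `&` X i @^-1` [set` `[u, +oo[%R]).
  exact: (mX i measurableT (measurable_itv `[u, +oo[)).
by rewrite setTI; apply/seteqP; split => w /=; rewrite in_itv /= andbT.
Qed.

Lemma mA1 S i : measurable (A1 S i).
Proof.
have -> : A1 S i = [set w | F w = S] `&` [set w | u <= X i w].
  apply/seteqP; split => w /= [h1 h2]; split => //.
    by apply: h2; rewrite inE.
  by move=> k; rewrite inE => /eqP ->.
exact: measurableI (mF S) (mpre i).
Qed.

Lemma mA2 S i j : measurable (A2 S i j).
Proof.
have -> : A2 S i j = [set w | F w = S] `&` ([set w | u <= X i w] `&` [set w | u <= X j w]).
  apply/seteqP; split => w /= [h1 h2]; split => //.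
    by split; apply: h2; rewrite !inE eqxx ?orbT.
  by move=> k; rewrite !inE => /orP[] /eqP ->; case: h2.
by apply: measurableI (mF S) _; apply: measurableI; apply: mpre.
Qed.

Lemma indA1 S i w : \1_(A1 S i) w = ((F w == S) && (u <= X i w))%:R :> R.
Proof.
rewrite indicE; congr (nat_of_bool _)%:R; apply/idP/idP.
  move=> /set_mem [/eqP -> h] /=; by apply: h; rewrite inE.
move=> /andP[/eqP h1 h2]; apply/mem_set; split => // k.
by rewrite inE => /eqP ->.
Qed.

Lemma indA2 S i j w : \1_(A2 S i j) w =
   ((F w == S) && (u <= X i w)%R && (u <= X j w)%R)%:R :> R.
Proof.
rewrite indicE; congr (nat_of_bool _)%:R; apply/idP/idP.
  move=> /set_mem [/eqP -> h] /=.
  by rewrite !h // !inE eqxx ?orbT.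
move=> /andP[/andP[/eqP h1 h2] h3]; apply/mem_set; split => // k.
by rewrite !inE => /orP[] /eqP ->.
Qed.


Lemma sum_pred1 (A : {set 'I_n}) i (x y : R) : i \in A ->
  \sum_(j in A) (x + (if i == j then y else 0)) = #|A|%:R * x + y.
Proof.
move=> iA; rewrite big_split /= sumr_const mulr_natl; congr (_ + _).
rewrite (bigD1 i) //= eqxx big1 ?addr0 // => j /andP[_ ji].
by rewrite eq_sym (negbTE ji).
Qed.

Lemma sum_constR (I : finType) (A : pred I) (x : R) : \sum_(i in A) x = #|A|%:R * x.
Proof. by rewrite sumr_const mulr_natl. Qed.

Variables (m : nat) (Psi : R -> R) (mu K : R).
Hypothesis m0 : (0 < m)%N.
Hypothesis mn : (m <= n)%N.
Hypothesis K1 : 1 <= K.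
Hypothesis hyp : forall (S : {set 'I_n}), #|S| = m -> forall (J : {set 'I_n}) (x : 'I_n -> R),
  P [set w | F w = S /\ forall i, i \in J -> x i <= X i w] =
  ((('C(n, m))%:R)^-1 * \prod_(i in J) Psi (x i - (if i \in S then mu else 0)))%:E.
Hypothesis hN : (n%:R - m%:R) * Psi u = K * m%:R.

Let Cr : R := ('C(n, m))%:R.
Let p := Psi u.
Let q := Psi (u - mu).

Lemma v1 (S : {set 'I_n}) i : #|S| = m ->
  fine (P (A1 S i)) = Cr^-1 * (if i \in S then q else p).
Proof.
move=> HS; rewrite /A1 hyp //= big_set1.
by case: ifP => _; rewrite ?subr0.
Qed.

Lemma v2 (S : {set 'I_n}) i j : #|S| = m -> i \notin S -> j \notin S ->
  fine (P (A2 S i j)) = Cr^-1 * (p * p + (if i == j then p - p * p else 0)).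
Proof.
move=> HS iS jS; rewrite /A2 hyp //=.
have [<-|ij] := eqVneq i j.
  rewrite finset.setUid big_set1 (negbTE iS) subr0; congr (_ * _); rewrite /p; ring.
rewrite big_setU1 ?big_set1 /=; last by rewrite finset.in_set1.
rewrite (negbTE iS) (negbTE jS) !subr0 addr0 //.
Qed.


Lemma oracle_ge0 (F0 : {set 'I_n}) (x : 'I_n -> R) : 0 <= oracle_loss F0 x.
Proof.
apply: lb_le_inf; first by exists (@FDP R n (rej_set x 0) F0 + @FNP R n (rej_set x 0) F0), 0.
move=> _ [t _ <-]; apply: addr_ge0.
  by rewrite /FDP; case: ifP => // _; rewrite divr_ge0.
by rewrite /FNP; case: ifP => // _; rewrite divr_ge0.
Qed.

Lemma natb_and (b1 b2 : bool) : ((b1 && b2)%:R : R) = b1%:R * b2%:R.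
Proof. by case: b1; case: b2; rewrite ?mul1r ?mul0r. Qed.

Lemma sum_bool (A : {set 'I_n}) (f : 'I_n -> bool) :
  \sum_(i in A) (f i)%:R = #|[set i in A | f i]|%:R :> R.
Proof.
rewrite -sum1_card natr_sum [LHS]big_mkcond [RHS]big_mkcond /=.
apply: eq_bigr => i _; rewrite !inE.
by case: (i \in A); case: (f i).
Qed.

Let c := K / (K + 2).
Let mr : R := m%:R.
Let a := c * 2 / (K * mr).
Let b := c / (K^+2 * mr^+2).
Let Sm := [set S : {set 'I_n} | #|S| == m]%SET.

Definition Lf w := \sum_(S in Sm) (a * \sum_(i in ~:S) \1_(A1 S i) w
   + (-b) * \sum_(i in ~:S) \sum_(j in ~:S) \1_(A2 S i j) w
   + (- mr^-1) * \sum_(i in S) \1_(A1 S i) w).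

Lemma term0 w (S : {set 'I_n}) : S != F w ->
  a * \sum_(i in ~:S) \1_(A1 S i) w
   + (-b) * \sum_(i in ~:S) \sum_(j in ~:S) \1_(A2 S i j) w
   + (- mr^-1) * \sum_(i in S) \1_(A1 S i) w = 0.
Proof.
move=> SF.
have FS : (F w == S) = false by rewrite eq_sym (negbTE SF).
rewrite big1 ?mulr0 ?add0r; last by move=> i _; rewrite indA1 FS.
rewrite big1 ?mulr0 ?add0r; last first.
  by move=> i _; rewrite big1 // => j _; rewrite indA2 FS.
by rewrite big1 ?mulr0 // => i _; rewrite indA1 FS.
Qed.

Lemma Lf_le w : Lf w <= oracle_loss (F w) (fun i => X i w).
Proof.
have [HF|HF] := eqVneq #|F w| m; last first.
  rewrite /Lf big1 ?oracle_ge0 // => S; rewrite /Sm inE => /eqP SM.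
  apply: term0; apply/negP => /eqP SF; move/eqP: HF; apply; by rewrite -SF.
rewrite /Lf (bigD1 (F w)) /=; last by rewrite /Sm inE HF.
rewrite [\sum_(i in Sm | i != F w) _]big1 ?addr0; last by move=> S /andP[_ SF]; apply: term0.
set S0 := F w.
have e1 : \sum_(i in ~: S0) (\1_(A1 S0 i) w : R) = \sum_(i in ~: S0) ((u <= X i w)%R%:R : R).
  by apply: eq_bigr => i _; rewrite indA1 eqxx.
have e2 : \sum_(i in S0) (\1_(A1 S0 i) w : R) = \sum_(i in S0) ((u <= X i w)%R%:R : R).
  by apply: eq_bigr => i _; rewrite indA1 eqxx.
have e3 : \sum_(i in ~: S0) \sum_(j in ~: S0) (\1_(A2 S0 i j) w : R) =
   \sum_(i in ~: S0) \sum_(j in ~: S0) ((u <= X i w)%R%:R * (u <= X j w)%R%:R : R).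
  by apply: eq_bigr => i _; apply: eq_bigr => j _; rewrite indA2 eqxx natb_and.
rewrite e1 e2 e3.
have hsq : \sum_(i in ~: S0) \sum_(j in ~: S0) ((u <= X i w)%R%:R * (u <= X j w)%R%:R : R)
   = (\sum_(i in ~: S0) ((u <= X i w)%R%:R : R)) ^+ 2.
  rewrite expr2 big_distrl /=; apply: eq_bigr => i _; rewrite big_distrr //.
rewrite hsq !sum_bool.
have -> : [set i in ~: S0 | u <= X i w]%SET = [set i | u <= X i w]%SET :\: S0.
  by apply/setP => i; rewrite !inE andbC.
have -> : [set i in S0 | u <= X i w]%SET = S0 :&: [set i | u <= X i w]%SET.
  by apply/setP => i; rewrite !inE.
have mp : 0 < mr by rewrite /mr ltr0n.
have Kp : 0 < K by apply: lt_le_trans K1.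
have H := @pointwise R n S0 (fun i => X i w) u K (ltac:(by rewrite /S0 HF)) K1.
rewrite /S0 HF -/mr -/S0 in H.
apply: le_trans H.
rewrite le_eqVlt; apply/orP; left; apply/eqP.
rewrite /hfun /a /b /c.
field.
apply/and3P; split; apply/negP => /eqP; lra.
Qed.


Lemma goodL : good P Lf (\sum_(S in Sm) (a * \sum_(i in ~:S) fine (P (A1 S i))
   + (-b) * \sum_(i in ~:S) \sum_(j in ~:S) fine (P (A2 S i j))
   + (- mr^-1) * \sum_(i in S) fine (P (A1 S i)))).
Proof.
apply: good_sum => S _.
apply: good_add; first apply: good_add.
- apply: good_scale; apply: good_sum => i _; apply: good_indic; exact: mA1.
- apply: good_scale; apply: good_sum => i _; apply: good_sum => j _.
  apply: good_indic; exact: mA2.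
- apply: good_scale; apply: good_sum => i _; apply: good_indic; exact: mA1.
Qed.

Lemma value_ge : (K - 1) / (K + 2) - q <=
  \sum_(S in Sm) (a * \sum_(i in ~:S) fine (P (A1 S i))
   + (-b) * \sum_(i in ~:S) \sum_(j in ~:S) fine (P (A2 S i j))
   + (- mr^-1) * \sum_(i in S) fine (P (A1 S i))).
Proof.
set N := n%:R - mr.
set W := a * (N * (Cr^-1 * p)) + (-b) * (N * (Cr^-1 * (N * (p * p) + (p - p * p))))
   + (- mr^-1) * (mr * (Cr^-1 * q)).
have cardC (S : {set 'I_n}) : #|S| = m -> #|~: S|%:R = N :> R.
  move=> HS; have h := cardsC S; rewrite card_ord HS in h.
  have h' := congr1 (subn^~ m) h; rewrite /= addKn in h'.
  by rewrite h' natrB.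
rewrite (eq_bigr (fun _ => W)); last first.
  move=> S; rewrite /Sm inE => /eqP HS.
  have s1 : \sum_(i in ~:S) fine (P (A1 S i)) = N * (Cr^-1 * p).
    rewrite -(cardC S HS) -sum_constR; apply: eq_bigr => i.
    by rewrite inE => iS; rewrite v1 // (negbTE iS).
  have s3 : \sum_(i in S) fine (P (A1 S i)) = mr * (Cr^-1 * q).
    by rewrite /mr -HS -sum_constR; apply: eq_bigr => i iS; rewrite v1 // iS.
  have s2 : \sum_(i in ~:S) \sum_(j in ~:S) fine (P (A2 S i j)) =
      N * (Cr^-1 * (N * (p * p) + (p - p * p))).
    rewrite -(cardC S HS) -sum_constR; apply: eq_bigr => i iS'.
    have iS : i \notin S by rewrite inE in iS'.
    rewrite -(sum_pred1 _ _ iS') big_distrr; apply: eq_bigr => j.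
    by rewrite inE => jS; rewrite v2.
  by rewrite s1 s2 s3.
rewrite sum_constR.
have -> : #|Sm| = 'C(n, m) by rewrite /Sm card_draws card_ord.
have mp : 0 < mr by rewrite /mr ltr0n.
have m1 : 1 <= mr by rewrite /mr ler1n.
have Kp : 0 < K by apply: lt_le_trans K1.
have Cp : 0 < Cr by rewrite /Cr ltr0n bin_gt0.
have N0 : 0 <= N by rewrite /N subr_ge0 /mr ler_nat.
have E1 : Cr * W = a * (N * p) - b * ((N * p) * (N * p) + N * p - N * (p * p)) - q.
  rewrite /W; field.
  by apply/andP; split; apply/negP => /eqP; lra.
rewrite -/Cr E1 hN -/mr.
rewrite -subr_ge0.
have -> : a * (K * mr) - b * (K * mr * (K * mr) + K * mr - N * (p * p)) - q -
   ((K - 1) / (K + 2) - q) = c / K * (1 - mr^-1) + b * (N * (p * p)).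
  rewrite /a /b /c; field.
  by apply/and3P; split; apply/negP => /eqP; lra.
apply: addr_ge0.
  apply: mulr_ge0; first by apply: divr_ge0; [apply: divr_ge0|]; lra.
  by rewrite subr_ge0 invf_le1.
apply: mulr_ge0.
  apply: divr_ge0; [apply: divr_ge0|]; try lra.
  by apply: mulr_ge0; apply: sqr_ge0.
apply: mulr_ge0 => //; rewrite -expr2; exact: sqr_ge0.
Qed.

Lemma expect_bound : (((K - 1) / (K + 2) - q)%:E <=
   \int[P]_w (oracle_loss (F w) (fun i => X i w))%:E)%E.
Proof.
have h := good_le (fun w => oracle_ge0 (F w) (fun i => X i w)) Lf_le goodL.
apply: le_trans h; rewrite lee_fin; exact: value_ge.
Qed.

End Expect.
Section Asym.
Context (R : realType) (gamma : R) (Psi : R -> R).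
Hypothesis g1 : 1 <= gamma.
Hypothesis Psi0 : forall y, 0 <= Psi y.
Hypothesis agg : AGG_right gamma Psi.

Lemma AGG_bounds (e : R) : 0 < e -> exists X0 : R, 0 < X0 /\ forall x, X0 <= x ->
  - (gamma^-1 + e) * x `^ gamma <= ln (Psi x) /\ ln (Psi x) <= - (gamma^-1 - e) * x `^ gamma.
Proof.
move=> e0.
have := agg; move/cvgrPdist_le => /(_ e e0) [M [Mr HM]].
exists (Num.max 1 (M + 1)); split; first by rewrite lt_max ltr01.
move=> x; rewrite ge_max => /andP[x1 Mx].
have := HM x ltac:(lra); rewrite ler_norml => /andP[h1 h2].
have y0 : 0 < x `^ gamma by apply: powR_gt0; lra.
rewrite powRN mulrC in h1 h2.
split.
  rewrite -ler_pdivlMr //; lra.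
rewrite -ler_pdivrMr //; lra.
Qed.

Lemma gamma0 : 0 < gamma.
Proof. by apply: lt_le_trans g1. Qed.

Lemma half_bounds : exists X0 : R, 0 < X0 /\ forall x, X0 <= x ->
  0 < Psi x /\ ln (Psi x) <= - (2 * gamma)^-1 * x `^ gamma.
Proof.
have g0 := gamma0.
have e0 : 0 < (2 * gamma)^-1 by rewrite invr_gt0; lra.
have [X0 [X00 HX]] := AGG_bounds e0.
exists X0; split => // x Xx.
have [_ h] := HX x Xx.
have e1 : gamma^-1 - (2 * gamma)^-1 = (2 * gamma)^-1.
  by field; apply/negP => /eqP; lra.
rewrite e1 in h.
have y0 : 0 < x `^ gamma by apply: powR_gt0; lra.
have hl : ln (Psi x) < 0.
  apply: le_lt_trans h _; rewrite mulNr oppr_lt0; exact: mulr_gt0.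
split => //.
rewrite lt_neqAle Psi0 andbT; apply/negP => /eqP h0.
by move: hl; rewrite -h0 ln0; lra.
Qed.

Lemma Psi_tail (eta Z : R) : 0 < eta -> exists Y, Z <= Y /\ forall x, Y <= x -> Psi x <= eta.
Proof.
move=> eta0.
have g0 := gamma0.
have [X0 [X00 HX]] := half_bounds.
exists (Num.max (Num.max Z X0) (Num.max 1 (2 * gamma * `|ln eta|))).
split; first by rewrite !le_max lexx.
move=> x; rewrite !ge_max => /andP[/andP[_ xX] /andP[x1 xL]].
have [p0 h] := HX x xX.
rewrite -ler_ln ?posrE //.
apply: le_trans h _.
have xg : x <= x `^ gamma.
  by rewrite -{1}(@powRr1 _ x) ?ler_powR //; lra.
have : `|ln eta| <= (2 * gamma)^-1 * x `^ gamma.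
  rewrite -ler_pdivrMl; last by rewrite invr_gt0; lra.
  rewrite invrK; apply: le_trans xL _; exact: xg.
have := ler_norm (- ln eta); rewrite normrN.
rewrite mulNr; lra.
Qed.

Lemma root_ge (a b : R) : 0 <= a -> 0 <= b -> b `^ gamma <= a -> b <= a `^ gamma^-1.
Proof.
move=> a0 b0 h.
have g0 := gamma0.
have -> : b = (b `^ gamma) `^ gamma^-1.
  by rewrite -powRrM mulfV ?powRr1 //; apply/negP => /eqP; lra.
apply: ge0_ler_powR => //; try by rewrite invr_ge0; lra.
all: by rewrite nnegrE ?powR_ge0.
Qed.

Lemma root_mono (a b : R) : 0 <= a -> 0 <= b -> a <= b -> a `^ gamma^-1 <= b `^ gamma^-1.
Proof.
move=> a0 b0 h; have g0 := gamma0.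
apply: ge0_ler_powR => //; try by rewrite invr_ge0; lra.
all: by rewrite nnegrE.
Qed.

Lemma ln_nat_ge (Z : R) (n : nat) : (Num.Def.trunc (expR Z) < n)%N -> Z <= ln (n%:R : R) /\ 0 < (n%:R : R).
Proof.
move=> h.
have h1 : expR Z < n%:R.
  apply: lt_le_trans (truncnS_gt _) _; by rewrite ler_nat.
have n0 : 0 < (n%:R : R) by apply: lt_trans h1; exact: expR_gt0.
split => //.
by rewrite -ler_expR lnK ?posrE // ltW.
Qed.


Variables (beta r : R).
Hypothesis b0 : 0 < beta.
Hypothesis b1 : beta < 1.
Hypothesis r0 : 0 < r.
Hypothesis rb : r < beta.
Hypothesis cPsi : continuous Psi.

Lemma asym_main (K eta : R) : 1 <= K -> 0 < eta -> exists N0 : nat, forall n : nat, (N0 <= n)%N ->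
  (0 < m_n beta n)%N /\ (m_n beta n <= n)%N /\
  exists u, (n%:R - (m_n beta n)%:R) * Psi u = K * (m_n beta n)%:R /\
            Psi (u - mu_n gamma r n) <= eta.
Proof.
move=> K1 eta0.
have b0p := b0; have b1p := b1; have r0p := r0; have rbp := rb.
have g0 := gamma0.
have K0 : 0 < K by lra.
pose rho2 := (r + 2 * beta) / 3.
pose rho1 := (2 * r + beta) / 3.
have r1 : r < rho1 by rewrite /rho1; lra.
have r12 : rho1 < rho2 by rewrite /rho1 /rho2; lra.
have r2b : rho2 < beta by rewrite /rho2; lra.
have rho2p : 0 < rho2 by lra.
pose e2 := (beta / rho2 - 1) / gamma.
have e20 : 0 < e2.
  rewrite /e2 divr_gt0 // subr_gt0 ltr_pdivlMr //; lra.
have [X1 [X10 HX1]] := AGG_bounds e20.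
have [X2 [X20 HX2]] := half_bounds.
pose X0 := Num.max X1 X2.
have X0p : 0 < X0 by rewrite lt_max X10.
have [P0p _] := HX2 X0 ltac:(by rewrite le_max lexx orbT).
pose kappa := rho1 `^ gamma^-1 - r `^ gamma^-1.
have kappa0 : 0 < kappa.
  rewrite /kappa subr_gt0; apply: gt0_ltr_powR; rewrite ?invr_gt0 ?nnegrE //; lra.
have [Y [Y0 HY]] := Psi_tail 0 eta0.
pose Z := Num.max (Num.max (ln 2 / beta) ((ln (2 * K) - ln (Psi X0)) / beta))
   (Num.max (rho2 * ln (2 * K) / (beta * (rho2 - rho1))) (Num.max 0 ((Y / kappa) `^ gamma / gamma))).
exists (Num.Def.trunc (expR Z)).+1 => n hn.
have [lZ n0] := ln_nat_ge hn.
set l := ln (n%:R : R) in lZ *.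
move: lZ; rewrite /Z !ge_max => /andP[/andP[lZ1 lZ2] /andP[lZ3 /andP[l0 lZ4]]].
have n1 : 1 <= (n%:R : R) by rewrite ler1n -(ltr0n R).
set m := m_n beta n.
set A := (n%:R : R) `^ (1 - beta).
have A0 : 0 < A by apply: powR_gt0.
have lA : ln A = (1 - beta) * l by rewrite /A ln_powR.
have A1 : 1 <= A by rewrite /A; have := @ler_powR R _ n1 0 (1 - beta); rewrite powRr0; apply; lra.
have mA : m%:R <= A by rewrite /m /m_n truncn_le ltW.
have m1 : (0 < m)%N by rewrite /m /m_n truncn_gt0.
have mr1 : 1 <= (m%:R : R) by rewrite ler1n.
have A2n : 2 * A <= n%:R.
  rewrite -ler_ln ?posrE ?mulr_gt0 // lnM ?posrE // lA -/l.
  have : beta * l >= ln 2 by rewrite -ler_pdivrMl // mulrC.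
  lra.
have mn : (m <= n)%N by rewrite -(ler_nat R); lra.
split => //; split => //.
pose N := (n%:R : R) - m%:R.
have Nn : n%:R / 2 <= N by rewrite /N; lra.
have N0 : 0 < N by lra.
pose p := K * m%:R / N.
have p0 : 0 < p by rewrite /p divr_gt0 // mulr_gt0 //; lra.
have lp : ln p <= ln (2 * K) - beta * l.
  have pb : p <= 2 * K * A / n%:R.
    rewrite /p ler_pdivrMr //.
    apply: (@le_trans _ _ (K * A)); first by rewrite ler_pM2l.
    have -> : K * A = 2 * K * A / n%:R * (n%:R / 2).
      by field; apply/negP => /eqP; lra.
    rewrite ler_pM2l //; apply: divr_gt0 => //; apply: mulr_gt0 => //; lra.
  have q0 : 0 < 2 * K * A / n%:R by apply: divr_gt0 => //; apply: mulr_gt0 => //; lra.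
  apply: (@le_trans _ _ (ln (2 * K * A / n%:R))); first by rewrite ler_ln ?posrE.
  rewrite lnM ?posrE ?invr_gt0 ?mulr_gt0 //; try lra.
  rewrite lnM ?posrE //; try lra.
  rewrite lnV ?posrE // lA -/l; lra.
have pP0 : p <= Psi X0.
  rewrite -ler_ln ?posrE //.
  have : beta * l >= ln (2 * K) - ln (Psi X0) by rewrite -ler_pdivrMl // mulrC.
  lra.
have [y1 [X0y1 Hy1]] := Psi_tail X0 p0.
have Py1 := Hy1 y1 (lexx _).
have [u uI Pu] := @IVT R Psi X0 y1 p X0y1 (continuous_subspaceT cPsi)
   ltac:(by rewrite ge_min le_max Py1 pP0 orbT).
move: uI; rewrite in_itv /= => /andP[uX _].
exists u; split.
  rewrite Pu /p -/N; field; apply/negP => /eqP; lra.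
have uX1 : X1 <= u by apply: le_trans uX; rewrite le_max lexx.
have u0 : 0 <= u by apply: ltW; apply: lt_le_trans uX.
have [hl _] := HX1 u uX1.
rewrite Pu in hl.
set U := u `^ gamma in hl.
set Lk := ln (2 * K) in lp lZ3.
have ee : gamma^-1 + e2 = beta / (rho2 * gamma).
  rewrite /e2; field; apply/andP; split; apply/negP => /eqP; lra.
rewrite ee in hl.
have h3 : gamma * (rho2 * (beta * l) - rho2 * Lk) <= beta * U.
  have h5 : - (beta / (rho2 * gamma)) * U <= Lk - beta * l by lra.
  have h6 := ler_wpM2l (ltW (mulr_gt0 rho2p g0)) h5.
  have e3 : rho2 * gamma * (- (beta / (rho2 * gamma)) * U) = - (beta * U).
    field; apply/andP; split; apply/negP => /eqP; lra.
  rewrite e3 in h6; lra.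
have h4 : rho2 * Lk <= l * (beta * (rho2 - rho1)).
  by rewrite -ler_pdivrMr // ?mulr_gt0 //; lra.
have h7 := ler_wpM2l (ltW g0) h4.
have UL : rho1 * (gamma * l) <= U.
  rewrite -(ler_pM2l b0).
  lra.
pose G := (gamma * l) `^ gamma^-1.
have gl0 : 0 <= gamma * l by apply: mulr_ge0; lra.
have hu : rho1 `^ gamma^-1 * G <= u.
  have h8 : (rho1 * (gamma * l)) `^ gamma^-1 <= U `^ gamma^-1.
    apply: root_mono => //; first by apply: mulr_ge0 => //; lra.
    by rewrite /U powR_ge0.
  rewrite powRM // in h8; last lra.
  by rewrite /U -powRrM mulfV ?powRr1 // in h8; apply/negP => /eqP; lra.
have hmu : mu_n gamma r n = r `^ gamma^-1 * G.
  rewrite /mu_n -/l /G -powRM //; last lra.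
  by congr (_ `^ _); ring.
have hG : Y / kappa <= G.
  apply: root_ge => //; first by apply: divr_ge0 => //; lra.
  by rewrite ler_pdivrMr // in lZ4; lra.
have kG : Y <= kappa * G by rewrite mulrC -ler_pdivrMr.
have ek : kappa * G = rho1 `^ gamma^-1 * G - r `^ gamma^-1 * G by rewrite /kappa mulrBl.
apply: HY; rewrite hmu; lra.
Qed.

End Asym.

Theorem theorem1 (R : realType) (gamma beta r : R) (Psi : R -> R)
  (d : measure_display) (T : nat -> measurableType d)
  (P : forall n : nat, probability (T n) R)
  (F : forall n : nat, T n -> {set 'I_n})
  (X : forall n : nat, 'I_n -> T n -> R) :
  1 <= gamma -> 0 < beta -> beta < 1 -> 0 < r -> r < beta ->
  continuous Psi -> is_survival_function Psi -> AGG_right gamma Psi ->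
  (forall n (S : {set 'I_n}), measurable [set w | F n w = S]) ->
  (forall n (i : 'I_n), measurable_fun setT (X n i)) ->
  (* F uniform over subsets of size m; given F, the X_i are independent with
     survival functions Psi(. - mu_i) *)
  (forall n (S : {set 'I_n}), #|S| = m_n beta n ->
     forall (J : {set 'I_n}) (x : 'I_n -> R),
       P n [set w | F n w = S /\ forall i, i \in J -> x i <= X n i w] =
       (('C(n, m_n beta n)%:R)^-1 *
          \prod_(i in J) Psi (x i - (if i \in S then mu_n gamma r n else 0)))%:E) ->
  (1%:E <= limn_einf (fun n : nat =>
     'E_(P n)[fun w => oracle_loss (F n w) (fun i => X n i w)]))%E.
Proof.
move=> g1 b0 b1 r0 rb cPsi [Q hQ] agg mF mX hyp.
have Psi0 : forall y, 0 <= Psi y.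
  by move=> y; rewrite -lee_fin hQ measure_ge0.
apply/lee_subgt0Pr => e e0.
pose K := 1 + 6 / e.
have K1 : 1 <= K by rewrite /K lerDl divr_ge0 // ltW.
have eta0 : 0 < e / 2 by rewrite divr_gt0.
have [N0 HN] := asym_main g1 Psi0 agg b0 b1 r0 rb cPsi K1 eta0.
rewrite limn_einf_lim.
apply: lime_ge; first exact: is_cvg_einfs.
near=> n.
apply: le_ereal_inf_tmp => _ [k /= nk <-].
have Nk : (N0 <= k)%N.
  apply: leq_trans nk; near: n; exists N0 => //.
have [m0 [mn [u [hu hq]]]] := HN k Nk.
rewrite unlock.
apply: le_trans (expect_bound (mF k) (mX k) m0 mn K1 (hyp k) hu).
rewrite -EFinB lee_fin.
have Kp : 0 < K by lra.
have : (K - 1) / (K + 2) >= 1 - e / 2.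
  rewrite ler_pdivlMr; last lra.
  rewrite /K.
  have -> : (1 - e / 2) * (1 + 6 / e + 2) = 6 / e - 3 * e / 2.
    field; apply/negP => /eqP; lra.
  have : 0 <= 3 * e / 2 by apply: divr_ge0; lra.
  lra.
lra.
Unshelve. all: by end_near.
Qed.
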